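(* Let $d\ge 1$ and let $P\subset\mathbb{R}^d$ be a finite set of $n\ge 1$ points. Then there exists $p\in P$ such that $p\in T$ for every orthant $T$ of fixed orientation with $|T\cap P|>(1-\frac{1}{d})n$.
   Context: An orthant of fixed orientation in $\mathbb{R}^d$ is a set of the form $\{x\in\mathbb{R}^d: x_j\le a_j \text{ for all } 1\le j\le d\}$ with $a_1,\dots,a_d\in\mathbb{R}$ (the intersection of $d$ halfspaces whose outward normals are the $d$ positive coordinate directions). *)

(* Defs.v *)
(* Points of R^d are row vectors 'rV[R]_d over an arbitrary
   real (ordered) field R; the statement is purely order-theoretic. *)
From HB Require Import structures.
From mathcomp Require Import all_boot all_order all_algebra.
Set Implicit Arguments. Unset Strict Implicit. Unset Printing Implicit Defensive.
Import Order.TTheory GRing.Theory Num.Theory.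
Local Open Scope ring_scope.

Definition orthant (R : realFieldType) (d : nat) (a : 'rV[R]_d) : pred 'rV[R]_d :=
  fun x => [forall j : 'I_d, x 0 j <= a 0 j].

(* Main.v *)
Require Import Defs.
From HB Require Import structures.
From mathcomp Require Import all_boot all_order all_algebra.
From mathcomp Require Import zify ring lra.
Import Order.TTheory GRing.Theory Num.Theory.
Local Open Scope ring_scope.

Lemma sub_in_count' (T : eqType) (a1 a2 : pred T) (s : seq T) :
  (forall x, x \in s -> a1 x -> a2 x) -> (count a1 s <= count a2 s)%N.
Proof.
elim: s => [//|x s IH] H /=.
apply: leq_add; last by apply: IH => y ys; apply: H; rewrite inE ys orbT.
case: (boolP (a1 x)) => // h; by rewrite (H x (mem_head _ _) h).
Qed.

Lemma seq_min (R : realFieldType) (T : eqType) (f : T -> R) (s : seq T) :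
  s != [::] -> exists2 x, x \in s & forall y, y \in s -> f x <= f y.
Proof.
elim: s => [//|x s IH] _.
case: (eqVneq s [::]) => [->|ne].
  by exists x; rewrite ?mem_head // => y; rewrite inE => /eqP ->.
have [z zs Hz] := IH ne.
case: (leP (f x) (f z)) => h.
  exists x; first exact: mem_head.
  move=> y; rewrite inE => /orP [/eqP ->//|ys]; exact: le_trans h (Hz y ys).
exists z; first by rewrite inE zs orbT.
move=> y; rewrite inE => /orP [/eqP ->|ys]; [exact: ltW | exact: Hz].
Qed.

Lemma count_exists (T : Type) (d : nat) (b : 'I_d -> pred T) (s : seq T) :
  (count (fun p => [exists j, b j p]) s <= \sum_(j < d) count (b j) s)%N.
Proof.
elim: s => [|x s IH] /=; first by rewrite big1.
rewrite big_split /=; apply: leq_add => //.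
case: existsP => [[j bj]|]; last by [].
by rewrite (bigD1 j) //= bj.
Qed.

Theorem corollary3 (R : realFieldType) (d : nat) (P : seq 'rV[R]_d) :
  (1 <= d)%N -> uniq P -> (1 <= size P)%N ->
  exists2 p : 'rV[R]_d, p \in P &
    forall a : 'rV[R]_d,
      (1 - (d%:R : R)^-1) * (size P)%:R < (count (orthant a) P)%:R :> R ->
      orthant a p.
Proof.
move=> d1 _ n1.
set n := size P.
pose c (j : 'I_d) (p : 'rV[R]_d) := count (fun q : 'rV[R]_d => p 0 j <= q 0 j) P.
pose bad (j : 'I_d) := fun p => (c j p * d < n)%N.
have Bj : forall j, (count (bad j) P * d < n)%N.
  move=> j.
  case: (eqVneq (filter (bad j) P) [::]) => [e|ne].
    by move: e => /eqP; rewrite -size_eq0 size_filter => /eqP ->; rewrite mul0n.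
  have [x xf Hx] := @seq_min R _ (fun q : 'rV[R]_d => q 0 j) _ ne.
  rewrite mem_filter in xf; case/andP: xf => bx xP.
  apply: leq_ltn_trans bx; rewrite leq_mul2r; apply/orP; right.
  apply: sub_in_count' => q qP bq; apply: Hx; by rewrite mem_filter bq.
have Hsum : (\sum_(j < d) count (bad j) P < n)%N.
  have : (\sum_(j < d) count (bad j) P <= \sum_(j < d) ((n.-1) %/ d))%N.
    apply: leq_sum => j _; rewrite leq_divRL; last by [].
    have := Bj j; lia.
  rewrite sum_nat_const card_ord => h.
  apply: leq_ltn_trans h _.
  have : (d * (n.-1 %/ d) <= n.-1)%N by rewrite mulnC leq_trunc_div.
  lia.
have : ~~ all (fun p => [exists j, bad j p]) P.
  rewrite all_count; apply/negP => /eqP e.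
  have := @count_exists _ _ bad P; rewrite e; fold n => h.
  by move: (leq_ltn_trans h Hsum); rewrite ltnn.
rewrite -has_predC => /hasP [p pP /= nb].
exists p => // a Ha.
apply/forallP => j; rewrite leNgt; apply/negP => ltj.
have nbj : ~~ bad j p by apply: contra nb => h; apply/existsP; exists j.
rewrite /bad -leqNgt in nbj.
have hc : (c j p <= count (predC (orthant a)) P)%N.
  apply: sub_count => q /= hq; apply/negP => /forallP /(_ j) hq'.
  by move: (lt_le_trans ltj hq); rewrite ltNge hq'.
have hs := count_predC (orthant a) P; fold n in hs.
set c1 := count (orthant a) P in Ha hs.
set c2 := count (predC (orthant a)) P in hc hs.
have hd : (n <= c2 * d)%N by apply: leq_trans nbj _; rewrite leq_mul2r hc orbT.
have Dpos : 0 < (d%:R : R) by rewrite ltr0n.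
have hs' : (c1%:R : R) = n%:R - c2%:R by rewrite -hs natrD; ring.
have hd' : (n%:R : R) <= c2%:R * d%:R by rewrite -natrM ler_nat.
rewrite hs' mulrBl mul1r in Ha.
have : (c2%:R : R) < (d%:R)^-1 * n%:R by lra.
rewrite ltr_pdivlMl // => h.
by rewrite mulrC in h; move: (le_lt_trans hd' h); rewrite ltxx.
Qed.
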